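(* Let $\mathcal{C}$ be a class of ontologies, $D$ a database, $\Pi=(\Sigma_{hg},\Sigma_{\mathcal{C}})$ a $\mathcal{C}$-dyadic pair of TGDs, and $q(\mathbf{x})$ a conjunctive query. Let $D^{+}=D\cup\mathrm{grAt}(D,\Pi)$. Then $\mathrm{cert}(q,D,\Sigma_{hg}\cup\Sigma_{\mathcal{C}})=\mathrm{cert}(q,D^{+},\Sigma_{\mathcal{C}})$.
   Context: Standard setting: constants, nulls, variables; atoms, databases (finite sets of facts), instances. A TGD is $\sigma:\Phi(\mathbf{x},\mathbf{y})\to\exists\mathbf{z}\,\Psi(\mathbf{x},\mathbf{z})$; $\mathbf{z}$ are existential variables, $\mathbf{x}=\mathrm{front}(\sigma)$ frontier variables; an ontology is a finite set of TGDs; a datalog rule is a TGD without existential variables and with a single head atom; $\mathsf{Datalog}$ is the class of ontologies of datalog rules. Certain answers $\mathrm{cert}(q,D,\Sigma)$ of a CQ $q$ is the intersection of $q(M)$ over all models $M\supseteq D$ of $\Sigma$. $\mathrm{chase}(D,\Sigma)$ is the (unique, nulls determined by triggers) result of the chase, a universal model. $\mathrm{hdpred}(\Sigma)$ / $\mathrm{bdpred}(\Sigma)$ denote the predicates occurring in heads / bodies of rules of $\Sigma$. Positions: $P[i]$ is the $i$-th argument position of predicate $P$. For an ontology $\Sigma$ and existential variable $z$ of $\Sigma$, a position $\pi$ is $z$-affected if either some rule has $z$ in its head at $\pi$, or some rule has a frontier variable $x$ occurring in its head at $\pi$ and occurring in its body only at $z$-affected positions. $\mathrm{aff}(\pi)$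 is the set of existential variables $z$ such that $\pi$ is $z$-affected. A body variable $x$ of a rule, occurring in the body at positions $\pi_1,\dots,\pi_n$, is harmless if $\bigcap_i\mathrm{aff}(\pi_i)=\emptyset$, otherwise harmful; a harmful frontier variable is dangerous. A set $\Sigma'\subseteq\Sigma$ is head-ground w.r.t. $\Sigma$ if: (1) $\Sigma'\in\mathsf{Datalog}$; (2) every head atom of $\Sigma'$ contains only variables that are harmless w.r.t. $\Sigma$; (3) $\mathrm{hdpred}(\Sigma')\cap\mathrm{bdpred}(\Sigma')=\emptyset$; (4) $\mathrm{hdpred}(\Sigma')\cap\mathrm{hdpred}(\Sigma\setminus\Sigma')=\emptyset$. A pair $\Pi=(\Sigma_{hg},\Sigma_{\mathcal{C}})$ of ontologies is $\mathcal{C}$-dyadic if $\Sigma_{hg}$ is head-ground w.r.t. $\Sigma_{hg}\cup\Sigma_{\mathcal{C}}$ and $\Sigma_{\mathcal{C}}\in\mathcal{C}$. Define $\mathrm{grAt}(D,\Pi)=\{a\in\mathrm{chase}(D,\Sigma_{hg}\cup\Sigma_{\mathcal{C}}) : \text{the predicate of } a \text{ is in } \mathrm{hdpred}(\Sigma_{hg})\}$. *)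

(* Defs.v *)
From mathcomp Require Import all_boot.
From Stdlib Require List.

Set Implicit Arguments.
Unset Strict Implicit.
Unset Printing Implicit Defensive.

(* Parameters: C = constants, V = variables, P = predicate symbols,
   ar = arity of each predicate (the schema). *)
Section TGDs.
Variables (C V P : eqType) (ar : P -> nat).

Inductive rterm := RVar of V | RConst of C.

Record ratom := RAtom { rpred : P; rargs : seq rterm }.

(* A TGD  body(x,y) -> exists z. head(x,z).  The existential variables are the
   head variables that do not occur in the body; the frontier variables are
   the head variables that occur in the body. *)
Record tgd := TGD { body : seq ratom; head : seq ratom }.

Definition ontology := seq tgd.

Definition rvars_of (a : ratom) : seq V :=
  pmap (fun t => if t is RVar v then Some v else None) (rargs a).

Definition atoms_vars (l : seq ratom) : seq V := undup (flatten (map rvars_of l)).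

Definition bvars (s : tgd) : seq V := atoms_vars (body s).
Definition hvars (s : tgd) : seq V := atoms_vars (head s).
Definition evars (s : tgd) : seq V := [seq v <- hvars s | v \notin bvars s].
Definition front (s : tgd) : seq V := [seq v <- hvars s | v \in bvars s].

Definition is_datalog (s : tgd) : Prop := evars s = [::] /\ size (head s) = 1%N.
Definition Datalog (S : ontology) : Prop := forall s, List.In s S -> is_datalog s.

(* conjunctive query q(x) = exists y. atoms; ansvars = x *)
Record cq := CQ { ansvars : seq V; qatoms : seq ratom }.

(* A null is named by the
   trigger that creates it: the rule, the images of the body variables of the
   rule (in the canonical order [bvars]), and the existential variable. *)
Inductive term := TConst of C | TNull of tgd & seq term & V.

Record atom := Atom { apred : P; aargs : seq term }.

Definition instance := atom -> Prop.

Definition fact := (P * seq C)%type.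
Definition database := seq fact.

Definition fact_atom (f : fact) : atom := Atom f.1 (map TConst f.2).

Definition db_inst (D : database) : instance :=
  fun a => exists f, List.In f D /\ a = fact_atom f.

Definition wf_ratom (a : ratom) : Prop := size (rargs a) = ar (rpred a).
Definition wf_atom (a : atom) : Prop := size (aargs a) = ar (apred a).
Definition wf_db (D : database) : Prop := forall f, List.In f D -> size f.2 = ar f.1.
Definition wf_ont (S : ontology) : Prop :=
  forall s, List.In s S ->
    (forall a, List.In a (body s) -> wf_ratom a) /\
    (forall a, List.In a (head s) -> wf_ratom a).
Definition wf_cq (q : cq) : Prop :=
  (forall a, List.In a (qatoms q) -> wf_ratom a) /\
  (forall x, x \in ansvars q -> x \in atoms_vars (qatoms q)).

Definition rsubst (h : V -> term) (t : rterm) : term :=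
  match t with RVar v => h v | RConst c => TConst c end.

Definition asubst (h : V -> term) (a : ratom) : atom :=
  Atom (rpred a) (map (rsubst h) (rargs a)).

Definition sat (M : instance) (s : tgd) : Prop :=
  forall h : V -> term,
    (forall b, List.In b (body s) -> M (asubst h b)) ->
    exists h' : V -> term,
      (forall v, v \in bvars s -> h' v = h v) /\
      (forall a, List.In a (head s) -> M (asubst h' a)).

Definition model (I : instance) (S : ontology) (M : instance) : Prop :=
  (forall a, M a -> wf_atom a) /\
  (forall a, I a -> M a) /\
  (forall s, List.In s S -> sat M s).

Definition qans (q : cq) (M : instance) (t : seq term) : Prop :=
  exists h : V -> term, map h (ansvars q) = t /\
    (forall a, List.In a (qatoms q) -> M (asubst h a)).

Definition cert (q : cq) (I : instance) (S : ontology) (t : seq term) : Prop :=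
  forall M, model I S M -> qans q M t.

(** * The chase (oblivious; nulls determined by triggers) *)

Definition trigger_ext (s : tgd) (h : V -> term) (v : V) : term :=
  if v \in evars s then TNull s (map h (bvars s)) v else h v.

Inductive chase (I : instance) (S : ontology) : atom -> Prop :=
| chase_base a : I a -> chase I S a
| chase_step s (h : V -> term) a :
    List.In s S ->
    (forall b, List.In b (body s) -> chase I S (asubst h b)) ->
    List.In a (head s) ->
    chase I S (asubst (trigger_ext s h) a).

Definition hdpredS (S : tgd -> Prop) (p : P) : Prop :=
  exists s a, S s /\ List.In a (head s) /\ rpred a = p.
Definition hdpred (S : ontology) (p : P) : Prop := hdpredS (fun s => List.In s S) p.
Definition bdpred (S : ontology) (p : P) : Prop :=
  exists s a, List.In s S /\ List.In a (body s) /\ rpred a = p.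

Definition position := (P * nat)%type.

Definition occurs_at (l : seq ratom) (x : V) (pi : position) : Prop :=
  exists a i, List.In a l /\ List.nth_error (rargs a) i = Some (RVar x) /\
              pi = (rpred a, i).

Definition exvar := (tgd * V)%type.
Definition is_exvar (S : ontology) (z : exvar) : Prop :=
  List.In z.1 S /\ z.2 \in evars z.1.

Inductive affected (S : ontology) (z : exvar) : position -> Prop :=
| aff_ex pi :
    is_exvar S z -> occurs_at (head z.1) z.2 pi -> affected S z pi
| aff_prop s x pi :
    List.In s S -> x \in front s -> occurs_at (head s) x pi ->
    (forall pi', occurs_at (body s) x pi' -> affected S z pi') ->
    affected S z pi.

Definition harmless (S : ontology) (s : tgd) (x : V) : Prop :=
  ~ exists z, is_exvar S z /\
      (forall pi, occurs_at (body s) x pi -> affected S z pi).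

Definition head_ground (S' S : ontology) : Prop :=
  (forall s, List.In s S' -> List.In s S) /\
  Datalog S' /\
  (forall s, List.In s S' -> forall x, x \in hvars s -> harmless S s x) /\
  (forall p, hdpred S' p -> ~ bdpred S' p) /\
  (forall p, hdpred S' p ->
     ~ hdpredS (fun s => List.In s S /\ ~ List.In s S') p).

Definition dyadic (Cls : ontology -> Prop) (Shg SC : ontology) : Prop :=
  head_ground Shg (Shg ++ SC) /\ Cls SC.

Definition grAt (D : database) (Shg SC : ontology) : instance :=
  fun a => chase (db_inst D) (Shg ++ SC) a /\ hdpred Shg (apred a).

Definition Dplus (D : database) (Shg SC : ontology) : instance :=
  fun a => db_inst D a \/ grAt D Shg SC a.

End TGDs.

(* Main.v *)
Require Import Defs.
From mathcomp Require Import all_boot.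
From Stdlib Require List.
From Stdlib Require Import ClassicalEpsilon.
Require Import Defs.

Set Implicit Arguments.
Unset Strict Implicit.
Unset Printing Implicit Defensive.

Section Proof.
Variables (C V P : eqType) (ar : P -> nat).
Local Notation term := (term C V P).
Local Notation atom := (atom C V P).
Local Notation ratom := (ratom C V P).
Local Notation rterm := (rterm C V).
Local Notation tgd := (tgd C V P).
Local Notation ontology := (ontology C V P).
Local Notation instance := (instance C V P).

Definition amap (g : term -> term) (a : atom) : atom := Atom (apred a) (map g (aargs a)).

Lemma nth_error_map (A B : Type) (f : A -> B) (l : seq A) i :
  List.nth_error (map f l) i = option_map f (List.nth_error l i).
Proof. by elim: l i => [|x l IH] [|i] //=. Qed.

Lemma in_map_ex (A B : Type) (f : A -> B) (l : seq A) y :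
  List.In y (map f l) -> exists x, List.In x l /\ f x = y.
Proof.
elim: l => [|x l IH] //= [<-|H]; first by exists x; auto.
by case: (IH H) => z [Hz <-]; exists z; auto.
Qed.

Lemma In_mem (T : eqType) (x : T) l : List.In x l -> x \in l.
Proof. elim: l => [|y l IH] //= [->|H]; rewrite inE ?eqxx //. by rewrite IH ?orbT. Qed.

Lemma rvars_nth (a : ratom) x :
  x \in rvars_of a <-> exists i, List.nth_error (rargs a) i = Some (RVar C x).
Proof.
case: a => p args; rewrite /rvars_of /=.
elim: args => [|r rs IH] /=.
  by split => // [[[|i]]].
case: r => [y|c] /=.
- rewrite inE; split.
  + case/orP => [/eqP->|/IH [i Hi]]; [by exists 0 | by exists i.+1].
  + case=> [[|i]] /= H; first by case: H => ->; rewrite eqxx.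
    apply/orP; right; apply/IH; by exists i.
- split.
  + by case/IH => i H; exists i.+1.
  + case=> [[|i]] //= H; apply/IH; by exists i.
Qed.

Lemma rvars_In (a : ratom) x : List.In (RVar C x) (rargs a) -> x \in rvars_of a.
Proof. move=> H; have [i Hi] := List.In_nth_error _ _ H; apply/rvars_nth; by exists i. Qed.

Lemma atoms_vars_In l x :
  x \in atoms_vars l <-> exists a : ratom, List.In a l /\ x \in rvars_of a.
Proof.
rewrite /atoms_vars mem_undup.
elim: l => [|a l IH] /=; first by split => //; case=> ? [].
rewrite mem_cat; split.
- case/orP => [H| /IH [b [Hb Hx]]]; first by exists a; auto.
  by exists b; auto.
- case=> b [[<-|Hb] Hx]; apply/orP; first by left.
  by right; apply/IH; exists b.
Qed.

Lemma asubst_ext (f1 f2 : V -> term) (a : ratom) :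
  (forall x, x \in rvars_of a -> f1 x = f2 x) -> asubst f1 a = asubst f2 a.
Proof.
move=> H.
have H' : forall x i, List.nth_error (rargs a) i = Some (RVar C x) -> f1 x = f2 x.
  by move=> x i Hi; apply: H; apply/rvars_nth; exists i.
rewrite /asubst; congr Atom.
clear H; case: a H' => p args /=.
elim: args => [|r rs IH] H //=.
congr cons; last by apply: IH => x i Hi; exact: (H x i.+1).
case: r H => [y|c] H //=; exact: (H y 0).
Qed.

Lemma amap_asubst (g : term -> term) (h : V -> term) (a : ratom) :
  (forall c, g (TConst V P c) = TConst V P c) ->
  amap g (asubst h a) = asubst (fun v => g (h v)) a.
Proof.
move=> Hg; rewrite /amap /asubst /=; congr Atom.
rewrite -map_comp; apply: eq_map => -[y|c] //=.
Qed.

Definition ground (a : atom) := forall x, List.In x (aargs a) -> exists c, x = TConst V P c.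

Lemma amap_ground (g : term -> term) a :
  (forall c, g (TConst V P c) = TConst V P c) -> ground a -> amap g a = a.
Proof.
move=> Hg; case: a => p l; rewrite /ground /amap /= => H; congr Atom.
elim: l H => [|x l IH] H //=.
have [c ->] := H x (or_introl erefl).
by rewrite Hg IH // => y Hy; apply: H; right.
Qed.

Lemma evars_notin (s : tgd) v : v \in bvars s -> v \notin evars s.
Proof. by move=> Hv; rewrite mem_filter Hv. Qed.

Lemma hvars_bvars (s : tgd) v : v \in hvars s -> v \notin evars s -> v \in bvars s.
Proof. by move=> Hh; rewrite mem_filter Hh andbT negbK. Qed.

Lemma head_hvars (s : tgd) a x : List.In a (head s) -> x \in rvars_of a -> x \in hvars s.
Proof. by move=> Ha Hx; apply/atoms_vars_In; exists a. Qed.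

Lemma body_bvars (s : tgd) a x : List.In a (body s) -> x \in rvars_of a -> x \in bvars s.
Proof. by move=> Ha Hx; apply/atoms_vars_In; exists a. Qed.

Lemma chase_wf (I : instance) (S : ontology) :
  (forall a, I a -> wf_atom ar a) -> wf_ont ar S -> forall a, chase I S a -> wf_atom ar a.
Proof.
move=> HI HS a; elim => {a} [a Ha|s h a Hs _ _ Ha]; first exact: HI.
rewrite /wf_atom /asubst /= size_map; exact: ((HS s Hs).2 a Ha).
Qed.

Lemma chase_model (I : instance) (S : ontology) :
  (forall a, I a -> wf_atom ar a) -> wf_ont ar S -> model ar I S (chase I S).
Proof.
move=> HI HS; split; first exact: chase_wf.
split; first by move=> a Ha; apply: chase_base.
move=> s Hs h Hb; exists (trigger_ext s h); split.
- by move=> v Hv; rewrite /trigger_ext (negbTE (evars_notin Hv)).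
- by move=> a Ha; apply: chase_step.
Qed.

Section Hom.
Variable M : instance.

Definition hb (s : tgd) (us : seq term) (v : V) : term :=
  nth (TNull s us v) us (index v (bvars s)).
Definition Pgood (s : tgd) (us : seq term) (h' : V -> term) : Prop :=
  (forall v, v \in bvars s -> h' v = hb s us v) /\
  (forall a, List.In a (head s) -> M (asubst h' a)).
Definition Gch (s : tgd) (us : seq term) : V -> term :=
  epsilon (inhabits (fun w => TNull s us w)) (Pgood s us).
Fixpoint gh (t : term) : term :=
  match t with
  | TConst c => TConst V P c
  | TNull s ts v => Gch s (map gh ts) v
  end.

Lemma hom (J : instance) (S : ontology) :
  (forall a, J a -> M (amap gh a)) ->
  (forall s h a, List.In s S ->
     (forall b, List.In b (body s) -> chase J S (asubst h b)) ->
     List.In a (head s) ->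
     sat M s \/ M (amap gh (asubst (trigger_ext s h) a))) ->
  forall a, chase J S a -> M (amap gh a).
Proof.
move=> HJ Hst a; elim => {a} [a Ha|s h a Hs Hb IH Ha]; first exact: HJ.
case: (Hst s h a Hs Hb Ha) => [Hsat|//].
set us := map gh (map h (bvars s)).
have Hhb : forall v, v \in bvars s -> hb s us v = gh (h v).
  move=> v Hv; rewrite /hb /us (nth_map (h v)) ?size_map ?index_mem //.
  by rewrite (nth_map v) ?index_mem // nth_index.
have Hex : exists h', Pgood s us h'.
  have Hbody : forall b, List.In b (body s) -> M (asubst (hb s us) b).
    move=> b Hb'; have := IH b Hb'; rewrite amap_asubst // => HM.
    rewrite (asubst_ext (f2 := fun v => gh (h v))) // => x Hx.
    by apply: Hhb; apply: body_bvars Hx.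
  have [h' [H1 H2]] := Hsat (hb s us) Hbody.
  by exists h'.
have [G1 G2] := epsilon_spec (inhabits (fun w => TNull s us w)) (Pgood s us) Hex.
rewrite amap_asubst //.
rewrite (asubst_ext (f2 := Gch s us)); first exact: G2.
move=> x Hx; have Hh := head_hvars Ha Hx.
rewrite /trigger_ext; case: ifP => Hev //=.
have Hbx : x \in bvars s by apply: hvars_bvars => //; rewrite Hev.
by rewrite /Gch G1 // Hhb.
Qed.

End Hom.

Lemma null_aff (D : database C P) (S : ontology) a :
  chase (db_inst D) S a -> forall i s0 ts v,
  List.nth_error (aargs a) i = Some (TNull s0 ts v) ->
  is_exvar S (s0, v) /\ affected S (s0, v) (apred a, i).
Proof.
elim => {a} [a [f [_ ->]]|s h a Hs Hb IH Ha] i s0 ts v.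
  rewrite /fact_atom /= nth_error_map.
  by case: (List.nth_error _ _).
rewrite /asubst /= nth_error_map.
case E: (List.nth_error (rargs a) i) => [[x|c]|] //= [].
rewrite /trigger_ext; case: ifP => Hev Hx.
  case: Hx => <- _ <-.
  have Hex : is_exvar S (s, x) by split.
  split => //; apply: aff_ex => //; by exists a, i.
have Hhx : x \in hvars s.
  apply: head_hvars Ha _; apply/rvars_nth; by exists i.
have Hbx : x \in bvars s by apply: hvars_bvars => //; rewrite Hev.
have [b [Hbb Hxb]] := proj1 (atoms_vars_In _ _) Hbx.
have [j Hj] := proj1 (rvars_nth _ _) Hxb.
have Hn : forall b' j', List.In b' (body s) ->
    List.nth_error (rargs b') j' = Some (RVar C x) ->
    List.nth_error (aargs (asubst h b')) j' = Some (TNull s0 ts v).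
  by move=> b' j' _ Hj'; rewrite /asubst /= nth_error_map Hj' /= Hx.
split; first exact: (proj1 (IH b Hbb j s0 ts v (Hn b j Hbb Hj))).
apply: (aff_prop (s := s) (x := x)) => //.
- by rewrite /front mem_filter Hbx Hhx.
- by exists a, i.
- move=> pi [b' [j' [Hb' [Hj' ->]]]].
  exact: (proj2 (IH b' Hb' j' s0 ts v (Hn b' j' Hb' Hj'))).
Qed.

Lemma grAt_ground (Cls : ontology -> Prop) (D : database C P) (Shg SC : ontology) a :
  dyadic Cls Shg SC -> grAt D Shg SC a -> ground a.
Proof.
move=> [[_ [Hdl [Hharm [_ Hhd]]]] _] [Hch Hp].
case: Hch Hp => [a' [f [_ ->]]|s h a' Hs Hb Ha] Hp.
  move=> x /= Hx; have [c [_ <-]] := in_map_ex Hx; by exists c.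
have [HsShg|HsN] := Classical_Prop.classic (List.In s Shg); last first.
  exfalso; apply: (Hhd _ Hp); exists s, a'; split => //.
move=> x /= Hx; have [[y|c] [Hr <-]] := in_map_ex Hx; last by exists c.
have Hhy : y \in hvars s by apply: head_hvars Ha (rvars_In Hr).
have [Hev _] := Hdl s HsShg.
rewrite /= /trigger_ext Hev in_nil.
have Hby : y \in bvars s by apply: hvars_bvars; rewrite // Hev.
case Ey: (h y) => [c|s0 ts v]; first by exists c.
exfalso; apply: (Hharm s HsShg y Hhy).
have Hn : forall b' j', List.In b' (body s) ->
    List.nth_error (rargs b') j' = Some (RVar C y) ->
    List.nth_error (aargs (asubst h b')) j' = Some (TNull s0 ts v).
  by move=> b' j' _ Hj'; rewrite /asubst /= nth_error_map Hj' /= Ey.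
have [b [Hbb Hxb]] := proj1 (atoms_vars_In _ _) Hby.
have [j Hj] := proj1 (rvars_nth _ _) Hxb.
exists (s0, v); split.
  exact: (proj1 (null_aff (Hb b Hbb) (Hn b j Hbb Hj))).
move=> pi [b' [j' [Hb' [Hj' ->]]]].
exact: (proj2 (null_aff (Hb b' Hb') (Hn b' j' Hb' Hj'))).
Qed.

Section Ren.
Variables (s0 : tgd) (ts0 : seq term) (v0 : V).
Definition ren (x : term) : term :=
  match x with TConst c => TConst V P c | TNull _ _ _ => TNull s0 (rcons ts0 x) v0 end.
Definition reninv (y : term) : term :=
  match y with TConst c => TConst V P c | TNull _ ts _ => last y ts end.
Lemma renK : cancel ren reninv.
Proof. by case=> [c|s ts v] //=; rewrite last_rcons. Qed.
Lemma ren_neq x : ren x <> TNull s0 ts0 v0.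
Proof.
case: x => [c|s ts v] //= [] /(congr1 size); rewrite size_rcons => E.
by move: E; elim: (size ts0) => // n IH [].
Qed.
Lemma amap_ren_inj : injective (amap ren).
Proof.
move=> [p l] [p' l'] [-> E]; congr Atom; exact: (inj_map (can_inj renK) E).
Qed.

Definition renI (K : instance) : instance := fun a => exists a0, K a0 /\ a = amap ren a0.

Lemma renI_model (I : instance) (S : ontology) K :
  model ar I S K -> (forall a, I a -> ground a) -> model ar I S (renI K).
Proof.
move=> [Hwf [HIK Hsat]] Hg; split.
  move=> a [a0 [Ha0 ->]]; rewrite /wf_atom /amap /= size_map; exact: Hwf.
split.
  move=> a Ha; exists a; split; first exact: HIK.
  by rewrite amap_ground //; apply: Hg.
move=> s Hs h Hb.
pose h0 := fun v => reninv (h v).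
have Hh0 : forall v, v \in bvars s -> ren (h0 v) = h v.
  move=> v Hv; have [b [Hbb Hvb]] := proj1 (atoms_vars_In _ _) Hv.
  have [i Hi] := proj1 (rvars_nth _ _) Hvb.
  have [a0 [_ E]] := Hb b Hbb.
  have := congr1 (fun a => List.nth_error (aargs a) i) E.
  rewrite /asubst /amap /= !nth_error_map Hi /=.
  case: (List.nth_error (aargs a0) i) => [y|] //= [E1].
  by rewrite /h0 E1 renK.
have Hbody : forall b, List.In b (body s) -> K (asubst h0 b).
  move=> b Hbb; have [a0 [Ha0 E]] := Hb b Hbb.
  suff -> : asubst h0 b = a0 by [].
  apply: amap_ren_inj; rewrite -E amap_asubst //.
  apply: asubst_ext => x Hx; apply: Hh0; exact: body_bvars Hx.
have [h' [H1 H2]] := Hsat s Hs h0 Hbody.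
exists (fun v => ren (h' v)); split.
  by move=> v Hv; rewrite H1 // Hh0.
move=> a Ha; exists (asubst h' a); split; first exact: H2.
by rewrite amap_asubst.
Qed.
End Ren.

Lemma cert_const (I : instance) (S : ontology) (q : cq C V P) K t :
  model ar I S K -> (forall a, I a -> ground a) -> wf_cq ar q ->
  cert ar q I S t -> forall x, List.In x t -> exists c, x = TConst V P c.
Proof.
move=> HK Hg [_ Hq] Hc x Hx.
case Ex: x => [c|s0 ts0 v0]; first by exists c.
exfalso.
have [hq [Ht Hat]] := Hc _ (renI_model s0 ts0 v0 HK Hg).
rewrite -Ht in Hx; have [y [Hy Ey]] := in_map_ex Hx.
have [a [Ha Hya]] := proj1 (atoms_vars_In _ _) (Hq y (In_mem Hy)).
have [i Hi] := proj1 (rvars_nth _ _) Hya.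
have [a0 [_ E]] := Hat a Ha.
have := congr1 (fun a => List.nth_error (aargs a) i) E.
rewrite /asubst /amap /= !nth_error_map Hi /= Ey Ex.
case: (List.nth_error (aargs a0) i) => [z|] //= [] /esym.
exact: ren_neq.
Qed.

End Proof.

Lemma map_fix_const (C V P : eqType) (g : term C V P -> term C V P) (t : seq (term C V P)) :
  (forall c, g (TConst V P c) = TConst V P c) ->
  (forall x, List.In x t -> exists c, x = TConst V P c) -> map g t = t.
Proof.
move=> Hg; elim: t => [|x t IH] H //=.
have [c ->] := H x (or_introl erefl).
by rewrite Hg IH // => y Hy; apply: H; right.
Qed.

Theorem mainTheorem3
  (C V P : eqType) (ar : P -> nat)
  (Cls : ontology C V P -> Prop)
  (D : database C P) (Shg SC : ontology C V P) (q : cq C V P) :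
  wf_db ar D -> wf_ont ar (Shg ++ SC) -> wf_cq ar q ->
  dyadic Cls Shg SC ->
  forall t : seq (term C V P),
    cert ar q (@db_inst C V P D) (Shg ++ SC) t <->
    cert ar q (Dplus D Shg SC) SC t.
Proof.
move=> HD HS Hq Hdy t.
have HI : forall a : atom C V P, db_inst D a -> ground a.
  move=> a [f [_ ->]] x /= Hx.
  have [c [_ <-]] := in_map_ex Hx.
  by exists c.
have HIwf : forall a : atom C V P, db_inst D a -> wf_atom ar a.
  move=> a [f [Hf ->]]; rewrite /wf_atom /fact_atom /= size_map; exact: HD.
have HK := chase_model HIwf HS.
have Hfix : forall (M : instance C V P) c, gh M (TConst V P c) = TConst V P c by [].
split.
- move=> Hc M [Mwf [MI Msat]].
  have Hgc := cert_const HK HI Hq Hc.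
  have [hK [Ht Hat]] := Hc _ HK.
  have Hhom : forall a, chase (db_inst D) (Shg ++ SC) a -> M (amap (gh M) a).
    apply: hom.
      move=> a Ha; rewrite amap_ground //; last exact: HI.
      by apply: MI; left.
    move=> s h a Hs Hb Ha.
    have [HsShg|HsN] := Classical_Prop.classic (List.In s Shg).
      right.
      have Hgr : grAt D Shg SC (asubst (trigger_ext s h) a).
        split; first exact: chase_step.
        by exists s, a.
      rewrite amap_ground //; last exact: (grAt_ground Hdy Hgr).
      by apply: MI; right.
    left; apply: Msat.
    by case: (List.in_app_or _ _ _ Hs).
  exists (fun v => gh M (hK v)); split.
    by rewrite map_comp Ht map_fix_const.
  move=> a Ha; rewrite -amap_asubst //; apply: Hhom; exact: Hat.
- move=> Hc M [Mwf [MI Msat]]; apply: Hc.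
  have Hhom : forall a, chase (db_inst D) (Shg ++ SC) a -> M (amap (gh M) a).
    apply: hom.
      move=> a Ha; rewrite amap_ground //; last exact: HI.
      exact: MI.
    move=> s h a Hs Hb Ha; left; exact: Msat.
  split => //; split.
    move=> a [Ha|Ha]; first exact: MI.
    rewrite -(amap_ground (Hfix M) (grAt_ground Hdy Ha)).
    exact: Hhom (proj1 Ha).
  move=> s Hs; apply: Msat; apply: List.in_or_app; by right.
Qed.
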